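(* Let $\omega\in\Omega$. Let $x\in\mathbb{Z}^2$ lie in an infinite $0$-cluster and $y\in\mathbb{Z}^2$ lie in an infinite $1$-cluster, and let $\ell_{xy}$ be a path of edges of $G$ from $x$ to $y$. Then the total number of crossings of $\ell_{xy}$ with infinite contours of $\phi(\omega)$ (i.e. the number of edges of $\ell_{xy}$, counted with multiplicity, crossed by an edge belonging to an infinite contour) is odd. In particular, if $\omega$ has both an infinite $0$-cluster and an infinite $1$-cluster, then $\phi(\omega)$ has an infinite contour.
   Context: Let $G$ be the square grid with vertex set $\mathbb{Z}^2$ and nearest-neighbour edges. The face of $G$ with lower-left corner $(m,n)$ is black if $m+n$ is even, white otherwise. $\Omega\subset\{0,1\}^{\mathbb{Z}^2}$ is the set of $\omega$ such that for every black face the states of its four vertices, listed clockwise from the lower-left corner, form one of $0000,1111,0011,1100,0110,1001$. A cluster of $\omega$ is a maximal $G$-connected set of vertices on which $\omega$ is constant ($0$- or $1$-cluster), infinite if it has infinitely many vertices. Let $\mathbb{L}_1$ have vertices $(m-\tfrac12,n+\tfrac12)$, $m,n$ both even, and $\mathbb{L}_2$ vertices $(m-\tfrac12,n+\tfrac12)$, $m,n$ both odd; in each, two vertices are joined by an edge (a segment of length $2$) iff at Euclidean distance $2$. Every edge of $G$ is crossed by exactly one edge of $\mathbb{L}_1\cup\mathbb{L}_2$. The center of each black face $F$ is the midpoint of exactly one edge $e_1$ of $\mathbb{L}_1$ and one edge $e_2$ of $\mathbb{L}_2$. Define $\phi(\omega)\in\{0,1\}^{E(\mathbb{L}_1)\cup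 E(\mathbb{L}_2)}$: if the configuration around $F$ is $0000$ or $1111$ both get $0$; if the two upper vertices share a state different from the two lower ones, the horizontal one of $e_1,e_2$ gets $1$, the vertical $0$; if the two left vertices share a state different from the two right ones, the vertical one gets $1$, the horizontal $0$. Edges with value $1$ are present; a contour is a connected component of the set of present edges, infinite if it has infinitely many edges. *)

(* Defs.v *)
From Stdlib Require Import ZArith List Relations Bool ClassicalEpsilon.
Open Scope Z_scope.

Definition V := (Z * Z)%type.
Definition config := V -> bool.

Definition adjG (u v : V) : Prop :=
  (fst u = fst v /\ (snd v = snd u + 1 \/ snd u = snd v + 1)) \/
  (snd u = snd v /\ (fst v = fst u + 1 \/ fst u = fst v + 1)).

(* face with lower-left corner (m,n) is black iff m+n is even *)
Definition black (m n : Z) : Prop := Z.even (m + n) = true.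

(* states listed clockwise from lower-left: LL, UL, UR, LR *)
Definition allowed (s0 s1 s2 s3 : bool) : Prop :=
  (s0, s1, s2, s3) = (false, false, false, false) \/
  (s0, s1, s2, s3) = (true, true, true, true) \/
  (s0, s1, s2, s3) = (false, false, true, true) \/
  (s0, s1, s2, s3) = (true, true, false, false) \/
  (s0, s1, s2, s3) = (false, true, true, false) \/
  (s0, s1, s2, s3) = (true, false, false, true).

Definition Omega (w : config) : Prop :=
  forall m n, black m n ->
    allowed (w (m, n)) (w (m, n + 1)) (w (m + 1, n + 1)) (w (m + 1, n)).

(* The dual vertex (m-1/2, n+1/2) is encoded by the integer
   pair (m,n); it is in L1 if m,n are both even, in L2 if both odd.
   DH p q : horizontal edge from (p,q) to (p+2,q)  (real: (p-1/2,q+1/2)--(p+3/2,q+1/2))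
   DV p q : vertical edge from (p,q) to (p,q+2)    (real: (p-1/2,q+1/2)--(p-1/2,q+5/2))
   Such a term is an edge of L1 ∪ L2 iff p ≡ q (mod 2). *)
Inductive DEdge : Type := DH (p q : Z) | DV (p q : Z).

Definition dedge_valid (e : DEdge) : Prop :=
  match e with DH p q => Z.even (p + q) = true | DV p q => Z.even (p + q) = true end.

Definition endpoints (e : DEdge) : list V :=
  match e with
  | DH p q => (p, q) :: (p + 2, q) :: nil
  | DV p q => (p, q) :: (p, q + 2) :: nil
  end.

Definition share_endpoint (e f : DEdge) : Prop :=
  exists v, In v (endpoints e) /\ In v (endpoints f).

Definition hsplit (w : config) (a b : Z) : bool :=
  eqb (w (a, b + 1)) (w (a + 1, b + 1)) && eqb (w (a, b)) (w (a + 1, b))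
  && negb (eqb (w (a, b + 1)) (w (a, b))).
Definition vsplit (w : config) (a b : Z) : bool :=
  eqb (w (a, b)) (w (a, b + 1)) && eqb (w (a + 1, b)) (w (a + 1, b + 1))
  && negb (eqb (w (a, b)) (w (a + 1, b))).

(* The midpoint of DH p q is the centre of the face with lower-left (p,q);
   the midpoint of DV p q is the centre of the face with lower-left (p-1,q+1). *)
Definition phi (w : config) (e : DEdge) : bool :=
  match e with
  | DH p q => hsplit w p q
  | DV p q => vsplit w (p - 1) (q + 1)
  end.

Definition present (w : config) (e : DEdge) : Prop :=
  dedge_valid e /\ phi w e = true.

Definition contour_rel (w : config) (e f : DEdge) : Prop :=
  present w e /\ present w f /\ share_endpoint e f.

Definition same_contour (w : config) (e f : DEdge) : Prop :=
  present w e /\ clos_refl_trans DEdge (contour_rel w) e f.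

Definition infinite_set {T : Type} (S : T -> Prop) : Prop :=
  forall l : list T, exists x, S x /\ ~ In x l.

Definition in_infinite_contour (w : config) (e : DEdge) : Prop :=
  present w e /\ infinite_set (same_contour w e).

Definition cluster_rel (w : config) (u v : V) : Prop := adjG u v /\ w u = w v.
Definition same_cluster (w : config) (x z : V) : Prop :=
  clos_refl_trans V (cluster_rel w) x z.
Definition in_infinite_cluster (w : config) (b : bool) (x : V) : Prop :=
  w x = b /\ infinite_set (same_cluster w x).

Definition crosses (e : DEdge) (u v : V) : Prop :=
  match e with
  | DH p q => (* y = q+1/2, x in [p-1/2, p+3/2]; G-edge vertical *)
      fst u = fst v /\ Z.min (snd u) (snd v) = q /\ p <= fst u <= p + 1
  | DV p q => (* x = p-1/2, y in [q+1/2, q+5/2]; G-edge horizontal *)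
      snd u = snd v /\ Z.min (fst u) (fst v) = p - 1 /\ q + 1 <= snd u <= q + 2
  end.

(* path of G-edges x = v0, v1, ..., vk given as x and the list [v1;...;vk] *)
Fixpoint gpath (x : V) (l : list V) : Prop :=
  match l with
  | nil => True
  | v :: l' => adjG x v /\ gpath v l'
  end.

Definition gpath_from_to (x y : V) (l : list V) : Prop :=
  gpath x l /\ last l x = y.

Fixpoint crossing_count (w : config) (x : V) (l : list V) : nat :=
  match l with
  | nil => 0%nat
  | v :: l' =>
      ((if excluded_middle_informative
             (exists e, dedge_valid e /\ crosses e x v /\ in_infinite_contour w e)
        then 1 else 0) + crossing_count w v l')%nat
  end.

(* Main.v *)
Require Import Defs.
From Stdlib Require Import ZArith List Lia Bool Classical ClassicalEpsilon Relations.
Open Scope Z_scope.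

Definition pb (P : Prop) : bool := if excluded_middle_informative P then true else false.
Lemma pb_true P : pb P = true <-> P.
Proof. unfold pb; destruct excluded_middle_informative; split; intros; auto; try discriminate; contradiction. Qed.
Lemma pb_false P : pb P = false <-> ~ P.
Proof. unfold pb; destruct excluded_middle_informative; split; intros; auto; try discriminate; contradiction. Qed.
Lemma pb_iff P Q : (P <-> Q) -> pb P = pb Q.
Proof. intros H. unfold pb; do 2 destruct excluded_middle_informative; tauto. Qed.

Definition crV (a b : Z) : DEdge := if Z.even (a + b) then DH a b else DH (a - 1) b.
Definition crH (a b : Z) : DEdge := if Z.even (a + b) then DV (a + 1) (b - 1) else DV (a + 1) (b - 2).
Definition cr (u v : V) : DEdge :=
  if Z.eqb (fst u) (fst v) then crV (fst u) (Z.min (snd u) (snd v))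
  else crH (Z.min (fst u) (fst v)) (snd u).

Lemma ev_t z : Z.even z = true -> exists k, z = 2 * k.
Proof. intros H. apply Z.even_spec in H. exact H. Qed.
Lemma ev_f z : Z.even z = false -> exists k, z = 2 * k + 1.
Proof. intros H. assert (Z.odd z = true) by (rewrite <- Z.negb_even, H; reflexivity).
  apply Z.odd_spec in H0. exact H0. Qed.

Ltac kill_even := repeat match goal with
  | H : Z.even _ = true |- _ => apply ev_t in H; destruct H
  | H : Z.even _ = false |- _ => apply ev_f in H; destruct H end.

Lemma adj_cases (a b : Z) v : adjG (a, b) v ->
  v = (a, b + 1) \/ v = (a, b - 1) \/ v = (a + 1, b) \/ v = (a - 1, b).
Proof. destruct v as [c d]; unfold adjG; simpl; intros H.
  destruct H as [[-> [->| ->]]|[-> [->| ->]]]; [left|right;left|right;right;left|right;right;right];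
  f_equal; lia. Qed.

Lemma crV_valid a b : dedge_valid (crV a b).
Proof. unfold crV; destruct (Z.even (a+b)) eqn:E; simpl; auto.
  kill_even. apply Z.even_spec. exists x. lia. Qed.

Lemma crH_valid a b : dedge_valid (crH a b).
Proof. unfold crH; destruct (Z.even (a+b)) eqn:E; simpl; apply Z.even_spec; kill_even; exists (x + 0); lia. Qed.

Lemma cr_valid u v : dedge_valid (cr u v).
Proof. unfold cr; destruct (_ =? _); [apply crV_valid|apply crH_valid]. Qed.

Lemma cr_cross (a b : Z) v e : adjG (a, b) v -> dedge_valid e ->
  (crosses e (a, b) v <-> e = cr (a, b) v).
Proof.
  intros Hadj Hv. apply adj_cases in Hadj.
  destruct Hadj as [ -> | [ -> | [ -> | -> ]]]; unfold cr, crV, crH; simpl;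
  [rewrite Z.eqb_refl | rewrite Z.eqb_refl | rewrite (proj2 (Z.eqb_neq a (a+1))) by lia
   | rewrite (proj2 (Z.eqb_neq a (a-1))) by lia];
  destruct e as [p q|p q]; simpl in Hv |- *;
  match goal with |- context [Z.even ?z] => destruct (Z.even z) eqn:E end;
  (split; [intros H; destruct H as [H1 [H2 H3]] | intros H; try discriminate; injection H; intros; subst])
  ; kill_even; try (exfalso; lia); try (f_equal; lia); try (repeat split; lia).
Qed.

Ltac fin_allowed HA :=
  unfold allowed in HA; repeat destruct HA as [HA|HA]; injection HA; intros E1 E2 E3 E4;
  rewrite ?E1, ?E2, ?E3, ?E4; simpl; split; intros; congruence.

Ltac norm_coords b := try replace (b - 2 + 1) with (b - 1) in * by ring;
  repeat rewrite Z.sub_add in *; repeat rewrite Z.add_simpl_r in *.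

Lemma cr_present w (Hw : Omega w) (a b : Z) v : adjG (a, b) v ->
  (present w (cr (a, b) v) <-> w (a, b) <> w v).
Proof.
  intros Hadj. unfold present. 
  assert (Hval := cr_valid (a, b) v).
  assert (E : phi w (cr (a,b) v) = true <-> w (a,b) <> w v); [|tauto].
  apply adj_cases in Hadj.
  destruct Hadj as [ -> | [ -> | [ -> | -> ]]]; unfold cr, crV, crH; simpl;
  [rewrite Z.eqb_refl | rewrite Z.eqb_refl | rewrite (proj2 (Z.eqb_neq a (a+1))) by lia
   | rewrite (proj2 (Z.eqb_neq a (a-1))) by lia].
  - rewrite Z.min_l by lia. destruct (Z.even (a + b)) eqn:E; simpl; unfold hsplit.
    + pose proof (Hw a b E) as HA. fin_allowed HA.
    + assert (E' : black (a - 1) b) by (unfold black; kill_even; apply Z.even_spec; exists x; lia).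
      pose proof (Hw _ _ E') as HA. norm_coords b. fin_allowed HA.
  - rewrite Z.min_r by lia. destruct (Z.even (a + (b - 1))) eqn:E; simpl; unfold hsplit.
    + pose proof (Hw _ _ E) as HA. norm_coords b. fin_allowed HA.
    + assert (E' : black (a - 1) (b - 1)) by (unfold black; kill_even; apply Z.even_spec; exists x; lia).
      pose proof (Hw _ _ E') as HA. norm_coords b. fin_allowed HA.
  - rewrite Z.min_l by lia. destruct (Z.even (a + b)) eqn:E; simpl; unfold vsplit.
    + pose proof (Hw a b E) as HA. norm_coords b. fin_allowed HA.
    + assert (E' : black a (b - 1)) by (unfold black; kill_even; apply Z.even_spec; exists x; lia).
      pose proof (Hw _ _ E') as HA. norm_coords b. fin_allowed HA.
  - rewrite Z.min_r by lia. destruct (Z.even (a - 1 + b)) eqn:E; simpl; unfold vsplit.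
    + pose proof (Hw _ _ E) as HA. norm_coords b. fin_allowed HA.
    + assert (E' : black (a - 1) (b - 1)) by (unfold black; kill_even; apply Z.even_spec; exists x; lia).
      pose proof (Hw _ _ E') as HA. norm_coords b. fin_allowed HA.
Qed.

Fixpoint sf (hf : Z -> Z -> bool) (n : nat) (a b : Z) : bool :=
  match n with O => false | S n => xorb (hf a b) (sf hf n (a+1) b) end.
Definition sfun hf K (a b : Z) := sf hf (Z.to_nat (K + 1 - a)) a b.


Lemma sfun_h hf vf K (Hsup : forall a b, (K < Z.abs a \/ K < Z.abs b) -> hf a b = false /\ vf a b = false) a b :
  sfun hf K a b = xorb (hf a b) (sfun hf K (a+1) b).
Proof. unfold sfun. destruct (Z_lt_le_dec K a).
  - rewrite (proj1 (Hsup a b ltac:(lia))).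
    replace (Z.to_nat (K+1-a)) with 0%nat by lia. replace (Z.to_nat (K+1-(a+1))) with 0%nat by lia. reflexivity.
  - replace (Z.to_nat (K+1-a)) with (S (Z.to_nat (K+1-(a+1)))) by lia. reflexivity.
Qed.

Lemma sfun_v hf vf K (Hsup : forall a b, (K < Z.abs a \/ K < Z.abs b) -> hf a b = false /\ vf a b = false)
  (Hface : forall a b, xorb (xorb (hf a b) (hf a (b+1))) (xorb (vf a b) (vf (a+1) b)) = false) :
  forall a b, xorb (sfun hf K a b) (sfun hf K a (b+1)) = vf a b.
Proof.
  intros a b. remember (Z.to_nat (K+1-a)) as n eqn:En. revert a En.
  induction n; intros a En.
  - unfold sfun. rewrite <- En. rewrite (proj2 (Hsup a b ltac:(lia))). reflexivity.
  - rewrite (sfun_h hf vf K Hsup a b), (sfun_h hf vf K Hsup a (b+1)).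
    pose proof (IHn (a+1) ltac:(lia)) as HI.
    pose proof (Hface a b) as HF.
    destruct (hf a b), (hf a (b+1)), (vf a b), (vf (a+1) b), (sfun hf K (a+1) b), (sfun hf K (a+1) (b+1));
      simpl in *; congruence.
Qed.

Lemma sf_row hf n a b : (forall a', hf a' b = false) -> sf hf n a b = false.
Proof. intros H. revert a; induction n; intros a; simpl; auto. rewrite H, IHn. reflexivity. Qed.

Lemma sfun_out hf vf K (Hsup : forall a b, (K < Z.abs a \/ K < Z.abs b) -> hf a b = false /\ vf a b = false)
  (Hface : forall a b, xorb (xorb (hf a b) (hf a (b+1))) (xorb (vf a b) (vf (a+1) b)) = false) :
  forall a b, (K < Z.abs a \/ K < Z.abs b) -> sfun hf K a b = false.
Proof.
  assert (Hrow : forall a b, K < Z.abs b -> sfun hf K a b = false).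
  { intros a b Hb. unfold sfun. apply sf_row. intros a'. apply (Hsup a' b). lia. }
  intros a b H.
  destruct (Z_lt_le_dec K (Z.abs b)) as [Hb|Hb]; [auto|].
  destruct (Z_lt_le_dec K a) as [Ha|Ha].
  { unfold sfun. replace (Z.to_nat (K+1-a)) with 0%nat by lia. reflexivity. }
  assert (Ha' : K < Z.abs a) by lia.
  remember (Z.to_nat (K+1-b)) as m eqn:Em. revert b H Hb Em.
  induction m; intros b H Hb Em.
  - lia.
  - pose proof (sfun_v hf vf K Hsup Hface a b) as HV.
    rewrite (proj2 (Hsup a b ltac:(lia))) in HV.
    destruct (Z_lt_le_dec K (Z.abs (b+1))).
    + rewrite (Hrow a (b+1)) in HV by lia. destruct (sfun hf K a b); simpl in *; congruence.
    + rewrite (IHm (b+1)) in HV by lia. destruct (sfun hf K a b); simpl in *; congruence.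
Qed.

Lemma cr_V a b : cr (a, b) (a, b + 1) = crV a b.
Proof. unfold cr; simpl. rewrite Z.eqb_refl, Z.min_l by lia. reflexivity. Qed.
Lemma cr_H a b : cr (a, b) (a + 1, b) = crH a b.
Proof. unfold cr; simpl. rewrite (proj2 (Z.eqb_neq a (a+1))) by lia. rewrite Z.min_l by lia. reflexivity. Qed.
Lemma cr_V' a b : cr (a, b) (a, b - 1) = crV a (b - 1).
Proof. unfold cr; simpl. rewrite Z.eqb_refl, Z.min_r by lia. reflexivity. Qed.
Lemma cr_H' a b : cr (a, b) (a - 1, b) = crH (a - 1) b.
Proof. unfold cr; simpl. rewrite (proj2 (Z.eqb_neq a (a-1))) by lia. rewrite Z.min_r by lia. reflexivity. Qed.

Lemma adjV a b : adjG (a, b) (a, b + 1).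
Proof. unfold adjG; simpl; lia. Qed.
Lemma adjH a b : adjG (a, b) (a + 1, b).
Proof. unfold adjG; simpl; lia. Qed.

Lemma pb_neq P (x y : bool) : (P <-> x <> y) -> pb P = xorb x y.
Proof. intros H. destruct (pb P) eqn:E.
  - apply (proj1 (pb_true P)) in E. apply H in E. destruct x, y; simpl; congruence.
  - apply (proj1 (pb_false P)) in E. destruct x, y; simpl; auto; exfalso; apply E, H; congruence. Qed.

Lemma presV w (Hw : Omega w) a b : pb (present w (crV a b)) = xorb (w (a, b)) (w (a, b + 1)).
Proof. apply pb_neq. rewrite <- cr_V. apply cr_present; auto. apply adjV. Qed.
Lemma presH w (Hw : Omega w) a b : pb (present w (crH a b)) = xorb (w (a, b)) (w (a + 1, b)).
Proof. apply pb_neq. rewrite <- cr_H. apply cr_present; auto. apply adjH. Qed.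

Lemma bool4 c1 c2 c3 c4 p1 p2 p3 p4 :
  (c1 = true -> p1 = true) -> (c2 = true -> p2 = true) ->
  (c3 = true -> p3 = true) -> (c4 = true -> p4 = true) ->
  (c1 || c2 || c3 || c4 = true -> c1 = p1 /\ c2 = p2 /\ c3 = p3 /\ c4 = p4) ->
  xorb (xorb p1 p2) (xorb p3 p4) = false -> xorb (xorb c1 c2) (xorb c3 c4) = false.
Proof.
  destruct c1, c2, c3, c4; simpl; intros; auto;
  match goal with H : true = true -> _ /\ _ |- _ => destruct (H eq_refl) as (?&?&?&?) end; subst; simpl in *; auto.
Qed.

Lemma even_add_1 z : Z.even (z + 1) = negb (Z.even z).
Proof. change (z + 1) with (Z.succ z). rewrite Z.even_succ, Z.negb_even. reflexivity. Qed.

Fixpoint bnd (L : list DEdge) : Z :=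
  match L with
  | nil => 0
  | e :: L' => Z.max (match e with DH p q => Z.abs p + Z.abs q + 3 | DV p q => Z.abs p + Z.abs q + 3 end) (bnd L')
  end.

Lemma bnd_In e L : In e L ->
  match e with DH p q => Z.abs p + Z.abs q + 3 | DV p q => Z.abs p + Z.abs q + 3 end <= bnd L.
Proof. induction L as [|f L IH]; simpl; [tauto|]. intros [->|H]; [lia|]. specialize (IH H). lia. Qed.

Lemma in_endpoints_DH p q : In (p, q) (endpoints (DH p q)) /\ In (p + 2, q) (endpoints (DH p q)).
Proof. simpl; auto. Qed.
Lemma in_endpoints_DV p q : In (p, q) (endpoints (DV p q)) /\ In (p, q + 2) (endpoints (DV p q)).
Proof. simpl; auto. Qed.

Lemma s_exists w (Hw : Omega w) (C : DEdge -> Prop)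
  (C1 : forall e, C e -> present w e)
  (C2 : forall e f, C e -> present w f -> share_endpoint e f -> C f)
  (C3 : exists L, forall e, C e -> In e L) :
  exists s : V -> bool,
    (forall u v, adjG u v -> pb (C (cr u v)) = xorb (s u) (s v)) /\
    (exists K, forall z, (K < Z.abs (fst z) \/ K < Z.abs (snd z)) -> s z = false).
Proof.
  destruct C3 as [L HL].
  set (K := bnd L).
  set (hf := fun a b => pb (C (crH a b))).
  set (vf := fun a b => pb (C (crV a b))).
  assert (Hsup : forall a b, (K < Z.abs a \/ K < Z.abs b) -> hf a b = false /\ vf a b = false).
  { intros a b Hab. unfold hf, vf. split; apply (proj2 (pb_false _)); intros HC; apply HL, bnd_In in HC;
    unfold crH, crV in HC; destruct (Z.even (a+b)); fold K in HC; lia. }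
  assert (Hface : forall a b, xorb (xorb (hf a b) (hf a (b+1))) (xorb (vf a b) (vf (a+1) b)) = false).
  { intros a b. unfold hf, vf. destruct (Z.even (a + b)) eqn:E.
    - assert (E1 : crH a (b + 1) = crH a b).
      { unfold crH. rewrite E. replace (a + (b+1)) with (a + b + 1) by ring.
        rewrite even_add_1, E; simpl. f_equal. ring. }
      assert (E2 : crV (a + 1) b = crV a b).
      { unfold crV. rewrite E. replace (a + 1 + b) with (a + b + 1) by ring.
        rewrite even_add_1, E; simpl. f_equal. ring. }
      rewrite E1, E2. destruct (pb (C (crH a b))), (pb (C (crV a b))); reflexivity.
    - assert (E1 : crH a (b + 1) = DV (a + 1) b).
      { unfold crH. replace (a + (b+1)) with (a + b + 1) by ring.
        rewrite even_add_1, E; simpl. f_equal. ring. }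
      assert (E2 : crV (a + 1) b = DH (a + 1) b).
      { unfold crV. replace (a + 1 + b) with (a + b + 1) by ring.
        rewrite even_add_1, E; simpl. reflexivity. }
      assert (E3 : crH a b = DV (a + 1) (b - 2)) by (unfold crH; rewrite E; reflexivity).
      assert (E4 : crV a b = DH (a - 1) b) by (unfold crV; rewrite E; reflexivity).
      assert (Hc : forall e, In (a + 1, b) (endpoints e) -> pb (C e) = true -> pb (present w e) = true).
      { intros e _ H. apply (proj1 (pb_true _)) in H. apply (proj2 (pb_true _)). auto. }
      assert (Hx : forall e f, In (a + 1, b) (endpoints e) -> In (a + 1, b) (endpoints f) ->
                pb (C e) = true -> pb (C f) = pb (present w f)).
      { intros e f He Hf H. apply (proj1 (pb_true _)) in H. apply pb_iff. split; [auto|].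
        intros Hp. apply (C2 e f); auto. exists (a + 1, b); auto. }
      assert (I1 : In (a + 1, b) (endpoints (crH a b))).
      { rewrite E3. simpl. right. left. f_equal. ring. }
      assert (I2 : In (a + 1, b) (endpoints (crH a (b + 1)))).
      { rewrite E1. simpl. left. reflexivity. }
      assert (I3 : In (a + 1, b) (endpoints (crV a b))).
      { rewrite E4. simpl. right. left. f_equal. ring. }
      assert (I4 : In (a + 1, b) (endpoints (crV (a + 1) b))).
      { rewrite E2. simpl. left. reflexivity. }
      apply bool4 with (pb (present w (crH a b))) (pb (present w (crH a (b+1))))
                       (pb (present w (crV a b))) (pb (present w (crV (a+1) b))); auto.
      + intros H. repeat rewrite orb_true_iff in H.
        destruct H as [[[H|H]|H]|H];
        [pose proof (fun f Hf => Hx _ f I1 Hf H) as Hy|pose proof (fun f Hf => Hx _ f I2 Hf H) as Hy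
        |pose proof (fun f Hf => Hx _ f I3 Hf H) as Hy|pose proof (fun f Hf => Hx _ f I4 Hf H) as Hy];
        repeat split; apply Hy; assumption.
      + rewrite !presH, !presV by auto.
        destruct (w (a, b)), (w (a + 1, b)), (w (a, b + 1)), (w (a + 1, b + 1)); reflexivity. }
  exists (fun z => sfun hf K (fst z) (snd z)). split.
  - intros [a b] v Hadj. apply adj_cases in Hadj.
    destruct Hadj as [ -> | [ -> | [ -> | -> ]]]; simpl.
    + rewrite cr_V. symmetry. apply (sfun_v hf vf K Hsup Hface).
    + rewrite cr_V'. pose proof (sfun_v hf vf K Hsup Hface a (b - 1)) as H.
      rewrite Z.sub_add in H. rewrite xorb_comm. rewrite H. reflexivity.
    + rewrite cr_H. rewrite (sfun_h hf vf K Hsup a b). fold (hf a b).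
      destruct (hf a b), (sfun hf K (a + 1) b); reflexivity.
    + rewrite cr_H'. rewrite (sfun_h hf vf K Hsup (a - 1) b). rewrite Z.sub_add. fold (hf (a - 1) b).
      destruct (hf (a - 1) b), (sfun hf K a b); reflexivity.
  - exists K. intros [a b] H. simpl in *. apply (sfun_out hf vf K Hsup Hface). auto.
Qed.

Fixpoint steps (x : V) (l : list V) : list (V * V) :=
  match l with nil => nil | v :: l' => (x, v) :: steps v l' end.
Fixpoint xorpath (f : V -> V -> bool) (x : V) (l : list V) : bool :=
  match l with nil => false | v :: l' => xorb (f x v) (xorpath f v l') end.

Lemma last_cons_ {A} (v : A) l d : last (v :: l) d = last l v.
Proof. revert v d; induction l as [|a l IH]; intros v d; [reflexivity|].
  change (last (a :: l) d = last (a :: l) v). rewrite !IH. reflexivity. Qed.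

Lemma xorpath_tele f g x l : gpath x l -> (forall u v, adjG u v -> f u v = xorb (g u) (g v)) ->
  xorpath f x l = xorb (g x) (g (last l x)).
Proof.
  revert x; induction l as [|v l IH]; intros x Hp Hf; cbn [xorpath].
  - simpl. destruct (g x); reflexivity.
  - destruct Hp as [Ha Hp]. rewrite (Hf _ _ Ha), (IH v Hp Hf), last_cons_.
    destruct (g x), (g v), (g (last l v)); reflexivity.
Qed.

Lemma xorpath_ext f g x l : (forall u v, In (u, v) (steps x l) -> f u v = g u v) ->
  xorpath f x l = xorpath g x l.
Proof.
  revert x; induction l as [|v l IH]; intros x H; simpl; auto.
  rewrite (H x v (or_introl eq_refl)), (IH v); auto. intros; apply H; simpl; auto.
Qed.

Lemma xorpath_xor f g x l :
  xorpath (fun u v => xorb (f u v) (g u v)) x l = xorb (xorpath f x l) (xorpath g x l).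
Proof.
  revert x; induction l as [|v l IH]; intros x; simpl; auto.
  rewrite IH. destruct (f x v), (g x v), (xorpath f v l), (xorpath g v l); reflexivity.
Qed.

Lemma steps_adj x l u v : gpath x l -> In (u, v) (steps x l) -> adjG u v.
Proof.
  revert x; induction l as [|a l IH]; intros x Hp H; simpl in *; [tauto|].
  destruct Hp as [Ha Hp]. destruct H as [H|H]; [injection H; intros; subst; auto|eauto].
Qed.

Lemma cross_iff w (u v : V) : adjG u v ->
  ((exists e, dedge_valid e /\ crosses e u v /\ in_infinite_contour w e) <-> in_infinite_contour w (cr u v)).
Proof.
  destruct u as [a b]. intros Ha. split.
  - intros [e [Hv [Hc Hi]]]. apply (cr_cross a b v e Ha Hv) in Hc. subst. auto.
  - intros Hi. exists (cr (a, b) v). split; [apply cr_valid|]. split; auto.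
    apply (cr_cross a b v); auto. apply cr_valid.
Qed.

Lemma count_odd w x l : gpath x l ->
  Nat.odd (crossing_count w x l) = xorpath (fun u v => pb (in_infinite_contour w (cr u v))) x l.
Proof.
  revert x; induction l as [|v l IH]; intros x Hp; simpl; auto.
  destruct Hp as [Ha Hp].
  destruct excluded_middle_informative as [H|H].
  - rewrite (proj2 (pb_true _)) by (apply (cross_iff w x v Ha); auto).
    simpl. rewrite Nat.odd_succ, <- Nat.negb_odd, IH; auto.
  - rewrite (proj2 (pb_false _)) by (intro H'; apply H, (cross_iff w x v Ha); auto).
    simpl. apply IH; auto.
Qed.

Lemma sc_present w r e : clos_refl_trans DEdge (contour_rel w) r e -> present w r -> present w e.
Proof. induction 1; auto. intros _. destruct H as [_ [H _]]; auto. Qed.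

Lemma sc_inf w r e : same_contour w r e -> infinite_set (same_contour w e) -> infinite_set (same_contour w r).
Proof.
  intros [Hr Hre] Hinf l. destruct (Hinf l) as [x [[He Hex] Hn]]. exists x. split; auto.
  split; auto. eapply rt_trans; eauto.
Qed.

Lemma not_inf_list {T} (S : T -> Prop) : ~ infinite_set S -> exists l, forall x, S x -> In x l.
Proof.
  intros H. apply not_all_ex_not in H. destruct H as [l Hl]. exists l. intros x Hx.
  apply NNPP. intros Hn. apply Hl. exists x. auto.
Qed.

Definition Cset w (R : list DEdge) (e : DEdge) : Prop :=
  exists r, In r R /\ present w r /\ ~ in_infinite_contour w r /\ same_contour w r e.

Lemma Cset_present w R e : Cset w R e -> present w e.
Proof. intros [r [_ [_ [_ [Hr H]]]]]. eapply sc_present; eauto. Qed.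

Lemma Cset_notinf w R e : Cset w R e -> ~ in_infinite_contour w e.
Proof.
  intros [r [_ [Hp [Hn Hs]]]] [_ Hi]. apply Hn. split; auto. eapply sc_inf; eauto.
Qed.

Lemma Cset_closed w R e f : Cset w R e -> present w f -> share_endpoint e f -> Cset w R f.
Proof.
  intros He Hf Hsh. pose proof (Cset_present w R e He) as Hpe.
  destruct He as [r [Hr [Hp [Hn [Hr' Hs]]]]]. exists r. split; [auto|split;[auto|split;[auto|]]].
  split; [auto|]. eapply rt_trans; [exact Hs|]. apply rt_step. split; [auto|split; auto].
Qed.

Lemma Cset_finite w R : exists L, forall e, Cset w R e -> In e L.
Proof.
  induction R as [|r R [L' HL']].
  - exists nil. intros e [r [[] _]].
  - destruct (classic (present w r /\ ~ in_infinite_contour w r)) as [[Hp Hn]|Hno].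
    + assert (Hf : ~ infinite_set (same_contour w r)) by (intro; apply Hn; split; auto).
      destruct (not_inf_list _ Hf) as [Lr HLr].
      exists (Lr ++ L'). intros e [r' [[<-|Hin] [Hp' [Hn' Hs]]]]; apply in_or_app.
      * left. auto.
      * right. apply HL'. exists r'. auto.
    + exists L'. intros e [r' [[<-|Hin] [Hp' [Hn' Hs]]]].
      * exfalso; auto.
      * apply HL'. exists r'. auto.
Qed.

Definition zr (K : Z) : list Z := map (fun n => Z.of_nat n - K) (seq 0 (Z.to_nat (2*K+1))).
Lemma zr_In K a : -K <= a <= K -> In a (zr K).
Proof. intros H. unfold zr. apply in_map_iff. exists (Z.to_nat (a + K)). split; [lia|]. apply in_seq. lia. Qed.

Lemma far w x : infinite_set (same_cluster w x) -> forall K,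
  exists z, same_cluster w x z /\ (K < Z.abs (fst z) \/ K < Z.abs (snd z)).
Proof.
  intros H K. destruct (H (list_prod (zr K) (zr K))) as [[a b] [Hz Hn]]. exists (a,b). split; auto. simpl.
  destruct (Z_lt_le_dec K (Z.abs a)); auto. destruct (Z_lt_le_dec K (Z.abs b)); auto.
  exfalso. apply Hn. apply in_prod; apply zr_In; lia.
Qed.

Lemma cluster_s w (Hw : Omega w) (C : DEdge -> Prop) (s : V -> bool)
  (C1 : forall e, C e -> present w e)
  (Hs : forall u v, adjG u v -> pb (C (cr u v)) = xorb (s u) (s v)) x z :
  same_cluster w x z -> s x = s z.
Proof.
  unfold same_cluster. induction 1 as [u v [Ha He]| |]; auto; [|congruence].
  assert (H : pb (C (cr u v)) = false).
  { apply (proj2 (pb_false _)). intros HC. apply C1 in HC. destruct u as [a b].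
    apply (cr_present w Hw a b v Ha) in HC. auto. }
  rewrite Hs in H by auto. destruct (s u), (s v); simpl in H; congruence.
Qed.

Lemma path_exists : forall n x y, Z.abs (fst x - fst y) + Z.abs (snd x - snd y) = Z.of_nat n ->
  exists l, gpath x l /\ last l x = y.
Proof.
  induction n; intros [a b] [c d] H; simpl in H.
  - exists nil. simpl. split; auto. f_equal; lia.
  - assert (Hstep : forall x', adjG (a, b) x' ->
        Z.abs (fst x' - c) + Z.abs (snd x' - d) = Z.of_nat n -> exists l, gpath (a, b) l /\ last l (a, b) = (c, d)).
    { intros x' Ha Hd. destruct (IHn x' (c, d) Hd) as [l [Hp Hl]]. exists (x' :: l). split.
      - simpl; auto.
      - rewrite last_cons_. auto. }
    destruct (Z_lt_le_dec a c).
    { apply (Hstep (a + 1, b)); [unfold adjG; simpl; lia| simpl; lia]. }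
    destruct (Z_lt_le_dec c a).
    { apply (Hstep (a - 1, b)); [unfold adjG; simpl; lia| simpl; lia]. }
    destruct (Z_lt_le_dec b d).
    { apply (Hstep (a, b + 1)); [unfold adjG; simpl; lia| simpl; lia]. }
    apply (Hstep (a, b - 1)); [unfold adjG; simpl; lia| simpl; lia].
Qed.

Lemma count_pos w x l : crossing_count w x l <> 0%nat -> exists e, in_infinite_contour w e.
Proof.
  revert x; induction l as [|v l IH]; intros x H; simpl in H; [congruence|].
  destruct excluded_middle_informative as [[e [_ [_ He]]]|_]; eauto.
Qed.

Theorem lemma2p8 (w : config) (Hw : Omega w) :
  (forall (x y : V) (l : list V),
      in_infinite_cluster w false x ->
      in_infinite_cluster w true y ->
      gpath_from_to x y l ->
      Nat.odd (crossing_count w x l) = true) /\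
  ((exists x, in_infinite_cluster w false x) ->
   (exists y, in_infinite_cluster w true y) ->
   exists e, in_infinite_contour w e).
Proof.
  assert (P1 : forall (x y : V) (l : list V),
      in_infinite_cluster w false x ->
      in_infinite_cluster w true y ->
      gpath_from_to x y l ->
      Nat.odd (crossing_count w x l) = true).
  { intros x y l [Hwx Hx] [Hwy Hy] [Hp Hl].
    set (R := map (fun p => cr (fst p) (snd p)) (steps x l)).
    destruct (s_exists w Hw (Cset w R) (Cset_present w R) (Cset_closed w R) (Cset_finite w R))
      as [s [Hs [K HK]]].
    assert (Hsx : s x = false).
    { destruct (far w x Hx K) as [z [Hz Hzo]].
      rewrite (cluster_s w Hw (Cset w R) s (Cset_present w R) Hs x z Hz). auto. }
    assert (Hsy : s y = false).
    { destruct (far w y Hy K) as [z [Hz Hzo]].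
      rewrite (cluster_s w Hw (Cset w R) s (Cset_present w R) Hs y z Hz). auto. }
    rewrite count_odd by auto.
    rewrite (xorpath_ext _ (fun u v => xorb (xorb (w u) (w v)) (pb (Cset w R (cr u v))))).
    - rewrite xorpath_xor.
      rewrite (xorpath_tele _ w x l Hp) by reflexivity.
      rewrite (xorpath_tele _ s x l Hp Hs).
      rewrite Hl, Hsx, Hsy, Hwx, Hwy. reflexivity.
    - intros u v Hin. pose proof (steps_adj x l u v Hp Hin) as Ha.
      assert (HP : xorb (w u) (w v) = pb (present w (cr u v))).
      { symmetry. apply pb_neq. destruct u as [a b]. apply cr_present; auto. }
      rewrite HP.
      destruct (classic (present w (cr u v))) as [Hpr|Hpr].
      + rewrite (proj2 (pb_true _) Hpr).
        destruct (classic (in_infinite_contour w (cr u v))) as [Hi|Hi].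
        * rewrite (proj2 (pb_true _) Hi).
          rewrite (proj2 (pb_false _)); [reflexivity|].
          intros HC. apply (Cset_notinf w R _ HC Hi).
        * rewrite (proj2 (pb_false _) Hi).
          rewrite (proj2 (pb_true _)); [reflexivity|].
          exists (cr u v). split.
          { unfold R. apply in_map_iff. exists (u, v). auto. }
          split; [auto|split; [auto|]]. split; [auto|apply rt_refl].
      + rewrite (proj2 (pb_false _) Hpr).
        rewrite (proj2 (pb_false _)); [|intros [H _]; auto].
        rewrite (proj2 (pb_false _)); [reflexivity|].
        intros HC. apply Hpr. eapply Cset_present; eauto. }
  split; [exact P1|].
  intros [x Hx] [y Hy].
  destruct (path_exists (Z.to_nat (Z.abs (fst x - fst y) + Z.abs (snd x - snd y))) x y ltac:(lia))
    as [l [Hp Hl]].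
  pose proof (P1 x y l Hx Hy (conj Hp Hl)) as Ho.
  apply (count_pos w x l). intros H0. rewrite H0 in Ho. discriminate.
Qed.
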